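(* Let $a\ge1$, let $f\colon[a,+\infty)\to\mathbb R$ be continuous with $|f(t)|\le c/t^2$ for all $t\ge a$, where $c>0$ is a real constant. Let $y_1,y_2\colon[a,+\infty)\to\mathbb R$ be $\mathbb R$-linearly independent $\mathcal C^2$ solutions of $y''+fy=0$, and put $y=y_1+y_2i$ and $z=y'/y$ (note $y(t)\ne0$ for all $t\ge a$). Then there is a real $D>0$ with $|z(t)|\le Dt^{2c}$ for all $t\ge a$.
   Context: Differentiability at the endpoint $a$ is understood one-sidedly. *)

(* Defs.v *)
From Stdlib Require Import Reals.
From Coquelicot Require Import Coquelicot.
Open Scope R_scope.

Definition halfline (a : R) : R -> Prop := fun s => a <= s.

Definition cont_on_halfline_at (a : R) (g : R -> R) (t : R) : Prop :=
  filterlim g (within (halfline a) (locally t)) (locally (g t)).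

Definition deriv_on_halfline_at (a : R) (g g' : R -> R) (t : R) : Prop :=
  filterlim (fun s => (g s - g t) / (s - t))
    (within (fun s => a <= s /\ s <> t) (locally t)) (locally (g' t)).

Definition C2_on_halfline (a : R) (g dg ddg : R -> R) : Prop :=
  forall t, a <= t ->
    deriv_on_halfline_at a g dg t /\
    deriv_on_halfline_at a dg ddg t /\
    cont_on_halfline_at a ddg t.

(* Main.v *)
Require Import Defs.
From Stdlib Require Import Reals Lra Psatz.
From Coquelicot Require Import Coquelicot.
Open Scope R_scope.

Lemma deriv_eps a g g' t : deriv_on_halfline_at a g g' t ->
  forall eps, 0 < eps -> exists d, 0 < d /\ forall s, a <= s -> s <> t -> Rabs (s - t) < d ->
    Rabs ((g s - g t) / (s - t) - g' t) < eps.
Proof.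
  intros H eps He. unfold deriv_on_halfline_at in H.
  apply filterlim_locally with (eps := mkposreal eps He) in H.
  destruct H as [[d Hd] H]. exists d; split; [exact Hd|].
  intros s H1 H2 H3. apply (H s H3 (conj H1 H2)).
Qed.

Lemma deriv_is_derive a g g' t : a < t -> deriv_on_halfline_at a g g' t ->
  is_derive g t (g' t).
Proof.
  intros Ht H. apply is_derive_Reals. intros eps He.
  destruct (deriv_eps _ _ _ _ H eps He) as [d [Hd H']].
  assert (Hm : 0 < Rmin d (t - a)) by (apply Rmin_pos; lra).
  exists (mkposreal _ Hm). simpl. intros h Hh Hl.
  assert (Hl1 := Rle_lt_trans _ _ _ (Rle_refl _) Hl).
  pose proof (Rmin_l d (t-a)). pose proof (Rmin_r d (t-a)).
  replace (t + h - t) with h in * by ring.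
  specialize (H' (t + h)).
  replace (t + h - t) with h in H' by ring.
  apply H'.
  - apply Rabs_lt_between in Hl. lra.
  - lra.
  - lra.
Qed.

Lemma deriv_cont a g g' : deriv_on_halfline_at a g g' a -> cont_on_halfline_at a g a.
Proof.
  intros H. unfold cont_on_halfline_at. apply filterlim_locally. intros [eps He].
  destruct (deriv_eps _ _ _ _ H 1 Rlt_0_1) as [d [Hd H']].
  set (K := Rabs (g' a) + 1).
  assert (HK : 0 < K) by (unfold K; pose proof (Rabs_pos (g' a)); lra).
  assert (Hm : 0 < Rmin d (eps / K)) by (apply Rmin_pos; [lra| apply Rdiv_lt_0_compat; lra]).
  exists (mkposreal _ Hm). intros s Hs Hsa. simpl in Hs. unfold halfline in Hsa.
  change (Rabs (g s - g a) < eps).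
  pose proof (Rmin_l d (eps/K)). pose proof (Rmin_r d (eps/K)).
  change (Rabs (s - a) < Rmin d (eps / K)) in Hs.
  destruct (Req_dec s a) as [E|E].
  - subst. replace (g a - g a) with 0 by ring. rewrite Rabs_R0; lra.
  - specialize (H' s Hsa E ltac:(lra)).
    assert (Hq : Rabs ((g s - g a) / (s - a)) <= K).
    { unfold K. replace ((g s - g a) / (s - a)) with (((g s - g a) / (s - a) - g' a) + g' a) by ring.
      eapply Rle_trans; [apply Rabs_triang|]. lra. }
    replace (g s - g a) with ((g s - g a) / (s - a) * (s - a)) by (field; lra).
    rewrite Rabs_mult.
    assert (Rabs (s - a) < eps / K) by lra.
    apply Rle_lt_trans with (K * Rabs (s - a)).
    + apply Rmult_le_compat_r; [apply Rabs_pos| exact Hq].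
    + apply Rmult_lt_compat_l with (r := K) in H2; [|lra].
      replace (K * (eps / K)) with eps in H2 by (field; lra). exact H2.
Qed.

Lemma cont_eps a g : cont_on_halfline_at a g a ->
  forall eps, 0 < eps -> exists d, 0 < d /\ forall s, a <= s -> Rabs (s - a) < d -> Rabs (g s - g a) < eps.
Proof.
  intros H eps He. unfold cont_on_halfline_at in H.
  apply filterlim_locally with (eps := mkposreal eps He) in H.
  destruct H as [[d Hd] H]. exists d; split; [exact Hd|].
  intros s H1 H3. apply (H s H3 H1).
Qed.

Lemma cont_mult a f g : cont_on_halfline_at a f a -> cont_on_halfline_at a g a ->
  cont_on_halfline_at a (fun t => f t * g t) a.
Proof. intros Hf Hg. exact (filterlim_comp_2 _ _ Rmult Hf Hg (filterlim_mult (K:=R_AbsRing) (f a) (g a))). Qed.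

Lemma cont_plus a f g : cont_on_halfline_at a f a -> cont_on_halfline_at a g a ->
  cont_on_halfline_at a (fun t => f t + g t) a.
Proof. intros Hf Hg. exact (filterlim_comp_2 _ _ Rplus Hf Hg (filterlim_plus (K:=R_AbsRing) (V:=R_NormedModule) (f a) (g a))). Qed.

Lemma cont_const a k : cont_on_halfline_at a (fun _ => k) a.
Proof. unfold cont_on_halfline_at. apply filterlim_const. Qed.

Lemma cont_std a f : continuous f a -> cont_on_halfline_at a f a.
Proof. intros H. unfold cont_on_halfline_at. eapply filterlim_filter_le_1; [apply filter_le_within| exact H]. Qed.

Lemma mono_int a (h h' : R -> R) : (forall t, a < t -> is_derive h t (h' t)) -> (forall t, a < t -> h' t <= 0) ->
  forall s t, a < s -> s <= t -> h t <= h s.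
Proof.
  intros Hd Hn s t Hs Hst. destruct (Req_dec s t) as [E|E]; [subst; lra|].
  destruct (MVT_gen h s t h') as [x [Hx Ex]].
  - intros x Hx. apply Hd. rewrite Rmin_left in Hx by lra. lra.
  - intros x Hx. rewrite Rmin_left in Hx by lra. apply continuity_pt_filterlim.
    apply (ex_derive_continuous (K:=R_AbsRing) (V:=R_NormedModule)). eexists. apply Hd. lra.
  - rewrite Rmin_left, Rmax_right in Hx by lra.
    assert (h' x <= 0) by (apply Hn; lra).
    assert (h' x * (t - s) <= 0) by (apply Rmult_le_0_r; lra). lra.
Qed.

Lemma mono_end a (h h' : R -> R) : (forall t, a < t -> is_derive h t (h' t)) -> (forall t, a < t -> h' t <= 0) ->
  cont_on_halfline_at a h a -> forall t, a <= t -> h t <= h a.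
Proof.
  intros Hd Hn Hc t Ht. destruct (Req_dec t a) as [E|E]; [subst; lra|].
  destruct (Rle_or_lt (h t) (h a)) as [L|L]; [exact L|].
  destruct (cont_eps _ _ Hc (h t - h a) ltac:(lra)) as [d [Hd0 Hdd]].
  set (s := a + Rmin d (t - a) / 2).
  assert (Hm : 0 < Rmin d (t - a)) by (apply Rmin_pos; lra).
  pose proof (Rmin_l d (t-a)). pose proof (Rmin_r d (t-a)).
  assert (H1 : h t <= h s) by (apply (mono_int a h h' Hd Hn); unfold s; lra).
  assert (H2 : Rabs (h s - h a) < h t - h a).
  { apply Hdd; unfold s; [lra|]. rewrite Rabs_right; lra. }
  apply Rabs_lt_between in H2. lra.
Qed.

Lemma Dmul (f g : R -> R) x df dg : is_derive f x df -> is_derive g x dg ->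
  is_derive (fun t => f t * g t) x (df * g x + f x * dg).
Proof. intros Hf Hg. exact (is_derive_mult f g x df dg Hf Hg Rmult_comm). Qed.
Lemma Dplus (f g : R -> R) x df dg : is_derive f x df -> is_derive g x dg ->
  is_derive (fun t => f t + g t) x (df + dg).
Proof. intros Hf Hg. exact (is_derive_plus f g x df dg Hf Hg). Qed.
Lemma DDminus (f g : R -> R) x df dg : is_derive f x df -> is_derive g x dg ->
  is_derive (fun t => f t - g t) x (df - dg).
Proof. intros Hf Hg. exact (is_derive_minus f g x df dg Hf Hg). Qed.
Lemma DDopp (f : R -> R) x df : is_derive f x df -> is_derive (fun t => - f t) x (- df).
Proof. intros Hf. exact (is_derive_opp f x df Hf). Qed.
Lemma Dl (f : R -> R) (x l l' : R) : is_derive f x l -> l = l' -> is_derive f x l'.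
Proof. intros H E; subst; exact H. Qed.

Lemma Dexplin k x : is_derive (fun t => exp (k * t)) x (k * exp (k * x)).
Proof.
  apply (is_derive_comp exp (fun t => k * t) x (exp (k*x)) k).
  - apply is_derive_exp.
  - apply (Dl _ _ (k * 1)); [apply (is_derive_scal (fun t => t)); exact (is_derive_id (K:=R_AbsRing) x)| apply Rmult_1_r].
Qed.
Lemma const_int a (h : R -> R) : (forall t, a < t -> is_derive h t 0) ->
  forall s t, a < s -> a < t -> h s = h t.
Proof.
  intros Hd.
  assert (M : forall s t, a < s -> s <= t -> h t = h s).
  { intros s t Hs Hst. apply Rle_antisym.
    - apply (mono_int a h (fun _ => 0)); auto; intros; lra.
    - assert (- h t <= - h s); [|lra].
      apply (mono_int a (fun t => - h t) (fun _ => 0)); auto; [|intros; lra].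
      intros t' Ht'. apply (Dl _ _ (- 0)); [apply DDopp; auto| ring]. }
  intros s t Hs Ht. destruct (Rle_or_lt s t).
  - symmetry; apply M; auto.
  - apply M; lra.
Qed.

Lemma uniqR a c (u du ddu f : R -> R) t0 : 0 < c ->
  (forall t, a < t -> is_derive u t (du t)) ->
  (forall t, a < t -> is_derive du t (ddu t)) ->
  (forall t, a < t -> ddu t = - f t * u t) ->
  (forall t, a < t -> Rabs (f t) <= c) -> a < t0 -> u t0 = 0 -> du t0 = 0 ->
  forall t, a < t -> u t = 0.
Proof.
  intros Hc Hu Hdu Hode Hf Ht0 U0 DU0.
  set (K := 1 + c).
  set (V := fun t => u t * u t + du t * du t).
  assert (HV : forall t, a < t -> is_derive V t (2 * u t * du t * (1 - f t))).
  { intros t Ht. unfold V. eapply Dl. apply Dplus; apply Dmul; auto.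
    rewrite (Hode t Ht). ring. }
  assert (Key : forall t, a < t -> Rabs (2 * u t * du t * (1 - f t)) <= K * V t).
  { intros t Ht. unfold K, V. specialize (Hf t Ht). revert Hf. generalize (u t) (du t) (f t). intros x y g Hf.
    apply Rabs_le_between in Hf.
    rewrite !Rabs_mult.
    rewrite (Rabs_right 2) by lra.
    assert (A1 : 2 * Rabs x * Rabs y <= x * x + y * y).
    { assert (Rabs x * Rabs x = x * x) by (rewrite <- Rabs_mult; apply Rabs_right; nra).
      assert (Rabs y * Rabs y = y * y) by (rewrite <- Rabs_mult; apply Rabs_right; nra).
      assert (0 <= Rabs x * Rabs x - 2 * Rabs x * Rabs y + Rabs y * Rabs y) by (replace (Rabs x * Rabs x - 2 * Rabs x * Rabs y + Rabs y * Rabs y) with ((Rabs x - Rabs y) * (Rabs x - Rabs y)) by ring; apply Rle_0_sqr). lra. }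
    assert (A2 : Rabs (1 - g) <= 1 + c). { apply Rabs_le. split; lra. }
    pose proof (Rabs_pos x); pose proof (Rabs_pos y); pose proof (Rabs_pos (1-g)).
    apply Rle_trans with ((x*x+y*y) * Rabs (1 - g)).
    - apply Rmult_le_compat_r; lra.
    - assert (0 <= x * x + y * y) by nra. nra. }
  assert (Vpos : forall t, 0 <= V t) by (intros; unfold V; nra).
  intros t Ht.
  assert (V t = 0).
  { destruct (Rle_or_lt t0 t).
    - set (H1 := fun t => V t * exp (- K * t)).
      assert (H1 t <= H1 t0).
      { apply (mono_int a H1 (fun t => exp (- K * t) * (2 * u t * du t * (1 - f t) - K * V t))); auto.
        - intros s Hs. unfold H1. eapply Dl. apply Dmul; [apply HV; auto| apply Dexplin]. cbv beta. ring.
        - intros s Hs. pose proof (exp_pos (- K * s)). specialize (Key s Hs).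
          apply Rabs_le_between in Key. apply Rmult_le_0_l; lra. }
      unfold H1 in H0. assert (V t0 = 0) by (unfold V; rewrite U0, DU0; ring).
      rewrite H2 in H0. pose proof (exp_pos (- K * t)). specialize (Vpos t). nra.
    - set (H1 := fun t => - (V t * exp (K * t))).
      assert (H1 t0 <= H1 t).
      { apply (mono_int a H1 (fun t => - (exp (K * t) * (2 * u t * du t * (1 - f t) + K * V t)))); auto; try lra.
        - intros s Hs. unfold H1. eapply Dl. apply DDopp. apply Dmul; [apply HV; auto| apply Dexplin]. cbv beta. ring.
        - intros s Hs. pose proof (exp_pos (K * s)). specialize (Key s Hs).
          apply Rabs_le_between in Key. assert (0 <= exp (K * s) * (2 * u s * du s * (1 - f s) + K * V s)); [|lra].
          apply Rmult_le_pos; lra. }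
      unfold H1 in H0. assert (V t0 = 0) by (unfold V; rewrite U0, DU0; ring).
      rewrite H2 in H0. pose proof (exp_pos (K * t)). specialize (Vpos t). nra. }
  unfold V in H. nra.
Qed.

Lemma pick (p q r s : R) : p * s - q * r = 0 -> exists al be, (al <> 0 \/ be <> 0) /\
  al * p + be * q = 0 /\ al * r + be * s = 0.
Proof.
  intros W.
  destruct (Req_dec p 0) as [Hp|Hp]; destruct (Req_dec q 0) as [Hq|Hq].
  - destruct (Req_dec r 0) as [Hr|Hr].
    + exists 1, 0. split; [left; lra|]. subst. split; ring.
    + exists s, (- r). split; [right; lra|]. split; nra.
  - exists q, (- p). split; [left; exact Hq|]. split; nra.
  - exists q, (- p). split; [right; lra|]. split; nra.
  - exists q, (- p). split; [left; exact Hq|]. split; nra.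
Qed.

Lemma zero_end a (u : R -> R) : cont_on_halfline_at a u a -> (forall t, a < t -> u t = 0) -> u a = 0.
Proof.
  intros Hc Hz. destruct (Req_dec (u a) 0) as [E|E]; [exact E|].
  assert (Hp : 0 < Rabs (u a)) by (apply Rabs_pos_lt; exact E).
  destruct (cont_eps _ _ Hc _ Hp) as [d [Hd H]].
  specialize (H (a + d/2) ltac:(lra) ltac:(rewrite Rabs_right; lra)).
  rewrite Hz in H by lra. replace (0 - u a) with (- u a) in H by ring.
  rewrite Rabs_Ropp in H. lra.
Qed.

Lemma quad_nonneg c g h k : 0 < c -> Rabs k <= c ->
  0 <= 2 * c * g * g - 2 * (c - k) * g * h + 2 * c * (c + 1) * h * h.
Proof.
  intros Hc Hk. apply Rabs_le_between in Hk.
  set (m := c - k).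
  assert (Hm : m * m <= 4 * c * c) by (unfold m; nra).
  assert (0 <= (2 * c * g - m * h) * (2 * c * g - m * h)) by apply Rle_0_sqr.
  assert (0 <= (4 * c * c * (c + 1) - m * m) * (h * h)) by (apply Rmult_le_pos; nra).
  assert (0 <= 2 * c * (2 * c * g * g - 2 * m * g * h + 2 * c * (c + 1) * h * h)) by nra.
  nra.
Qed.

Theorem mainTheorem18 (a c : R) (f y1 dy1 ddy1 y2 dy2 ddy2 : R -> R)
  (ha : 1 <= a) (hc : 0 < c)
  (hf_cont : forall t, a <= t -> cont_on_halfline_at a f t)
  (hf_bound : forall t, a <= t -> Rabs (f t) <= c / (t ^ 2))
  (hy1 : C2_on_halfline a y1 dy1 ddy1)
  (hy2 : C2_on_halfline a y2 dy2 ddy2)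
  (hode1 : forall t, a <= t -> ddy1 t + f t * y1 t = 0)
  (hode2 : forall t, a <= t -> ddy2 t + f t * y2 t = 0)
  (hindep : forall al be : R,
      (forall t, a <= t -> al * y1 t + be * y2 t = 0) -> al = 0 /\ be = 0) :
  let y : R -> C := fun t => (y1 t, y2 t) in
  let dy : R -> C := fun t => (dy1 t, dy2 t) in
  let z : R -> C := fun t => Cdiv (dy t) (y t) in
  exists D : R, 0 < D /\
    forall t, a <= t -> Cmod (z t) <= D * Rpower t (2 * c).
Proof.
  intros y dy z.
  assert (Dy1 : forall t, a < t -> is_derive y1 t (dy1 t))
    by (intros t Ht; apply (deriv_is_derive a); [lra| apply (proj1 (hy1 t ltac:(lra)))]).
  assert (Dy2 : forall t, a < t -> is_derive y2 t (dy2 t))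
    by (intros t Ht; apply (deriv_is_derive a); [lra| apply (proj1 (hy2 t ltac:(lra)))]).
  assert (DDy1 : forall t, a < t -> is_derive dy1 t (ddy1 t))
    by (intros t Ht; apply (deriv_is_derive a); [lra| apply (proj1 (proj2 (hy1 t ltac:(lra))))]).
  assert (DDy2 : forall t, a < t -> is_derive dy2 t (ddy2 t))
    by (intros t Ht; apply (deriv_is_derive a); [lra| apply (proj1 (proj2 (hy2 t ltac:(lra))))]).
  assert (Cy1 := deriv_cont a y1 dy1 (proj1 (hy1 a (Rle_refl a)))).
  assert (Cy2 := deriv_cont a y2 dy2 (proj1 (hy2 a (Rle_refl a)))).
  assert (Cdy1 := deriv_cont a dy1 ddy1 (proj1 (proj2 (hy1 a (Rle_refl a))))).
  assert (Cdy2 := deriv_cont a dy2 ddy2 (proj1 (proj2 (hy2 a (Rle_refl a))))).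
  assert (O1 : forall t, a < t -> ddy1 t = - f t * y1 t) by (intros t Ht; specialize (hode1 t ltac:(lra)); lra).
  assert (O2 : forall t, a < t -> ddy2 t = - f t * y2 t) by (intros t Ht; specialize (hode2 t ltac:(lra)); lra).
  assert (FB : forall t, a < t -> Rabs (t * t * f t) <= c).
  { intros t Ht. specialize (hf_bound t ltac:(lra)). rewrite Rabs_mult, (Rabs_right (t*t)) by nra.
    apply (Rmult_le_compat_l (t*t)) in hf_bound; [|nra].
    replace (t * t * (c / t ^ 2)) with c in hf_bound by (field; lra). exact hf_bound. }
  assert (FB1 : forall t, a < t -> Rabs (f t) <= c).
  { intros t Ht. specialize (FB t Ht). rewrite Rabs_mult, (Rabs_right (t*t)) in FB by nra.
    pose proof (Rabs_pos (f t)). assert (1 <= t * t) by nra. assert (0 <= (t * t - 1) * Rabs (f t)) by (apply Rmult_le_pos; lra). nra. }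
  set (W := fun t => y1 t * dy2 t - y2 t * dy1 t).
  assert (HW : forall t, a < t -> is_derive W t 0).
  { intros t Ht. unfold W. eapply Dl. apply DDminus; apply Dmul; auto.
    rewrite (O1 t Ht), (O2 t Ht). ring. }
  assert (Wc := const_int a W HW).
  set (W0 := W (a + 1)).
  assert (W0nz : W0 <> 0).
  { intros HW0. destruct (pick (y1 (a+1)) (y2 (a+1)) (dy1 (a+1)) (dy2 (a+1)) HW0) as [al [be [Hnz [E1 E2]]]].
    set (u := fun t => al * y1 t + be * y2 t).
    assert (Uz : forall t, a < t -> u t = 0).
    { apply (uniqR a c u (fun t => al * dy1 t + be * dy2 t) (fun t => al * ddy1 t + be * ddy2 t) f (a + 1)); auto; try lra.
      - intros t Ht. unfold u. apply Dplus; apply (is_derive_scal); auto.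
      - intros t Ht. apply Dplus; apply (is_derive_scal); auto.
      - intros t Ht. rewrite (O1 t Ht), (O2 t Ht). unfold u. ring. }
    assert (Ua : u a = 0).
    { apply zero_end; auto. unfold u. apply cont_plus; apply cont_mult; auto; apply cont_const. }
    destruct (hindep al be) as [A1 A2].
    - intros t Ht. destruct (Req_dec t a) as [->|Ht']; [exact Ua|]. apply Uz. lra.
    - lra. }
  set (P := fun t => dy1 t * dy1 t + dy2 t * dy2 t).
  set (Q := fun t => y1 t * y1 t + y2 t * y2 t).
  set (V := fun t => P t + c * Q t * / (t * t)).
  set (E := fun t => exp (- (2 * c) * ln t)).
  set (G := fun t => V t * E t).
  set (Qf := fun g h k => 2 * c * g * g - 2 * (c - k) * g * h + 2 * c * (c + 1) * h * h).
  assert (Dinv : forall t, 0 < t -> is_derive (fun t => / (t * t)) t (- (1 * t + t * 1) / (t * t) ^ 2)).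
  { intros t Ht. apply (is_derive_inv (fun t => t * t)); [|nra].
    apply Dmul; exact (is_derive_id (K:=R_AbsRing) t). }
  assert (DE : forall t, 0 < t -> is_derive E t ((- (2 * c) * / t) * E t)).
  { intros t Ht. unfold E.
    apply (is_derive_comp exp (fun t => - (2 * c) * ln t) t (exp (- (2 * c) * ln t)) (- (2 * c) * / t)).
    - apply is_derive_exp.
    - apply (is_derive_scal ln). apply is_derive_ln; exact Ht. }
  assert (HG : forall t, a < t -> is_derive G t
     (- (E t / t) * (Qf (dy1 t) (y1 t / t) (t * t * f t) + Qf (dy2 t) (y2 t / t) (t * t * f t)))).
  { intros t Ht. unfold G, V, P, Q. eapply Dl.
    apply Dmul; [|apply DE; lra].
    apply Dplus. { apply Dplus; apply Dmul; auto. }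
    apply Dmul; [| apply Dinv; lra].
    apply (is_derive_scal (fun t => y1 t * y1 t + y2 t * y2 t)).
    apply Dplus; apply Dmul; auto.
    rewrite (O1 t Ht), (O2 t Ht). unfold Qf. cbv beta. field. lra. }
  assert (HGn : forall t, a < t -> - (E t / t) * (Qf (dy1 t) (y1 t / t) (t * t * f t) + Qf (dy2 t) (y2 t / t) (t * t * f t)) <= 0).
  { intros t Ht. pose proof (quad_nonneg c (dy1 t) (y1 t / t) (t * t * f t) hc (FB t Ht)).
    pose proof (quad_nonneg c (dy2 t) (y2 t / t) (t * t * f t) hc (FB t Ht)).
    assert (0 < E t / t) by (unfold E; apply Rdiv_lt_0_compat; [apply exp_pos| lra]).
    unfold Qf. nra. }
  assert (CG : cont_on_halfline_at a G a).
  { unfold G, V, P, Q. apply cont_mult.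
    - apply cont_plus. { apply cont_plus; apply cont_mult; auto. }
      apply cont_mult. { apply cont_mult; [apply cont_const|]. apply cont_plus; apply cont_mult; auto. }
      apply cont_std. apply (ex_derive_continuous (K:=R_AbsRing) (V:=R_NormedModule)). eexists. apply Dinv. lra.
    - apply cont_std. apply (ex_derive_continuous (K:=R_AbsRing) (V:=R_NormedModule)). eexists. apply DE. lra. }
  assert (GM := mono_end a G _ HG HGn CG).
  set (M := G a).
  assert (ER : forall t, 0 < t -> E t * Rpower t (2 * c) = 1).
  { intros t Ht. unfold E, Rpower. rewrite <- exp_plus. replace (- (2 * c) * ln t + 2 * c * ln t) with 0 by ring.
    apply exp_0. }
  assert (Vpos : forall t, a <= t -> 0 <= V t).
  { intros t Ht. unfold V, P, Q. assert (0 < / (t * t)) by (apply Rinv_0_lt_compat; nra).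
    assert (0 <= c * (y1 t * y1 t + y2 t * y2 t)) by nra. nra. }
  assert (Mpos : 0 <= M).
  { unfold M, G. apply Rmult_le_pos; [apply Vpos; lra| unfold E; left; apply exp_pos]. }
  assert (PB : forall t, a < t -> P t <= M * Rpower t (2 * c)).
  { intros t Ht. assert (HV : V t = G t * Rpower t (2 * c)).
    { unfold G. rewrite Rmult_assoc, ER by lra. ring. }
    assert (P t <= V t).
    { unfold V. assert (0 < / (t * t)) by (apply Rinv_0_lt_compat; nra).
      assert (0 <= c * Q t) by (unfold Q; nra). nra. }
    pose proof (GM t ltac:(lra)). assert (0 < Rpower t (2 * c)) by (unfold Rpower; apply exp_pos).
    rewrite HV in H. fold M in H0. nra. }
  set (Ra := Rpower a (2 * c)).
  assert (Rapos : 0 < Ra) by (unfold Ra, Rpower; apply exp_pos).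
  exists (M / Rabs W0 + Cmod (z a) / Ra + 1). split.
  { assert (0 < Rabs W0) by (apply Rabs_pos_lt; exact W0nz).
    assert (0 <= M / Rabs W0) by (apply Rdiv_le_0_compat; lra).
    assert (0 <= Cmod (z a) / Ra) by (apply Rdiv_le_0_compat; [apply Cmod_ge_0| lra]). lra. }
  intros t Ht. destruct (Req_dec t a) as [->|Hta].
  { fold Ra. replace (Cmod (z a)) with (Cmod (z a) / Ra * Ra) at 1 by (field; lra).
    assert (0 < Rabs W0) by (apply Rabs_pos_lt; exact W0nz).
    assert (0 <= M / Rabs W0) by (apply Rdiv_le_0_compat; lra).
    apply Rmult_le_compat_r; lra. }
  assert (Ht' : a < t) by lra.
  assert (WW : W t = W0) by (apply Wc; lra).
  assert (Lag : W0 * W0 <= Q t * P t).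
  { rewrite <- WW. unfold W, Q, P.
    assert (0 <= (y1 t * dy1 t + y2 t * dy2 t) * (y1 t * dy1 t + y2 t * dy2 t)) by apply Rle_0_sqr. nra. }
  assert (W2 : 0 < W0 * W0) by (pose proof (Rsqr_pos_lt W0 W0nz) as HH; unfold Rsqr in HH; exact HH).
  assert (Qp : 0 < Q t) by (unfold Q, P in *; nra).
  assert (Pp : 0 < P t) by (unfold Q, P in *; nra).
  set (s := sqrt (P t)). set (q := sqrt (Q t)).
  assert (Hs : s * s = P t) by (apply sqrt_sqrt; lra).
  assert (Hq : q * q = Q t) by (apply sqrt_sqrt; lra).
  assert (s0 : 0 < s) by (apply sqrt_lt_R0; lra).
  assert (q0 : 0 < q) by (apply sqrt_lt_R0; lra).
  assert (AW : 0 < Rabs W0) by (apply Rabs_pos_lt; exact W0nz).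
  assert (AW2 : Rabs W0 * Rabs W0 = W0 * W0) by (rewrite <- Rabs_mult; apply Rabs_right; lra).
  assert (Wsq : Rabs W0 <= s * q).
  { assert (Hsq : Rabs W0 * Rabs W0 <= (s * q) * (s * q)) by (replace ((s*q)*(s*q)) with ((s*s)*(q*q)) by ring; rewrite AW2, Hs, Hq; lra).
    destruct (Rle_or_lt (Rabs W0) (s * q)) as [LL|LL]; [exact LL|]. assert (0 < s * q) by nra. nra. }
  assert (Zt : Cmod (z t) = s / q).
  { unfold z, y, dy. rewrite Cmod_div.
    - unfold Cmod, s, q, P, Q. simpl. f_equal; f_equal; ring.
    - intros Hz. injection Hz as E1 E2. unfold Q in Qp. rewrite E1, E2 in Qp. lra. }
  rewrite Zt.
  assert (S1 : s / q <= s * s / Rabs W0).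
  { apply (Rmult_le_reg_r (q * Rabs W0)); [nra|].
    replace (s / q * (q * Rabs W0)) with (s * Rabs W0) by (field; lra).
    replace (s * s / Rabs W0 * (q * Rabs W0)) with (s * (s * q)) by (field; lra).
    apply Rmult_le_compat_l; lra. }
  rewrite Hs in S1. specialize (PB t Ht').
  assert (Rt : 0 < Rpower t (2 * c)) by (unfold Rpower; apply exp_pos).
  assert (P t / Rabs W0 <= M / Rabs W0 * Rpower t (2 * c)).
  { unfold Rdiv. rewrite Rmult_assoc, (Rmult_comm (/ Rabs W0)), <- Rmult_assoc.
    apply Rmult_le_compat_r; [left; apply Rinv_0_lt_compat; lra| lra]. }
  assert (0 <= Cmod (z a) / Ra) by (apply Rdiv_le_0_compat; [apply Cmod_ge_0| lra]).
  nra.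
Qed.
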